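(* Let $k\in\mathbb{N}$, $k>2$, and let $\mathcal{O}$ be an oval with support function $h$. Let $L_{\mathcal{O}}$ be the length of $\mathcal{O}$, $A_{\mathcal{O}}$ the area of the region bounded by $\mathcal{O}$, and $A_{\mathcal{P}_k}$ the oriented area of the $k$th Order Preserving Set $\mathcal{P}_k$ of $\mathcal{O}$ (defined in the context). Then \[ L_{\mathcal{O}}^2-4\pi A_{\mathcal{O}}\geqslant 4\pi\,|A_{\mathcal{P}_k}|. \] Equality holds if and only if every equiangular $k$-gon circumscribed about $\mathcal{O}$ is a regular $k$-gon whose center of mass is the Steiner point of $\mathcal{O}$.
   Context: An oval is a simple, closed, regular, smooth ($C^\infty$) planar curve with nowhere vanishing curvature. Write $u(s)=(\cos s,\sin s)$, $u'(s)=(-\sin s,\cos s)$. The support function of $\mathcal{O}$ is the smooth $2\pi$-periodic function $h(s)=\sup_{x\in\mathcal{O}}\langle x,u(s)\rangle$, with Fourier series $h(s)=a_0+\sum_{n\geqslant1}(a_n\cos(ns)+b_n\sin(ns))$, and $\mathcal{O}(s)=h(s)u(s)+h'(s)u'(s)$, $s\in[0,2\pi]$. The average width is $\overline{w}=\frac1\pi\int_0^{2\pi}h(s)\,ds$, and the Steiner point is $\frac1\pi\int_0^{2\pi}h(s)u(s)\,ds=(a_1,b_1)$. For $(x,y)\in\mathbb{R}^2$ let $(x,y)^\perp=(-y,x)$. The $k$th Order Preserving Set is the curve $\mathcal{P}_k(s)=\frac{1}{k}\sum_{j=1}^{k}\Big(\cos\big(\tfrac{2\pi j}{k}\big)\,\mathcal{O}\big(s+\tfrac{2\pi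 j}{k}\big)-\sin\big(\tfrac{2\pi j}{k}\big)\,\mathcal{O}\big(s+\tfrac{2\pi j}{k}\big)^{\perp}\Big)-\frac{1}{2}\overline{w}\,u(s)$, $s\in[0,2\pi]$, and its oriented area is $A_{\mathcal{P}_k}=\frac12\int_0^{2\pi}(x\,y'-y\,x')\,ds$ where $\mathcal{P}_k(s)=(x(s),y(s))$. For $s\in\mathbb{R}$ let $\ell_j(s)=\{x:\langle x,u(s+\tfrac{2\pi j}{k})\rangle=h(s+\tfrac{2\pi j}{k})\}$; the equiangular $k$-gon circumscribed about $\mathcal{O}$ at parameter $s$ has vertices $v_j(s)=\ell_j(s)\cap\ell_{j+1}(s)$, $j=0,\dots,k-1$ (indices mod $k$), and every equiangular $k$-gon with sides on support lines of $\mathcal{O}$ is of this form. Its center of mass is $\frac1k\sum_j v_j(s)$. *)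

(* Defs.v *)
From Stdlib Require Import Reals Lra.
From Coquelicot Require Import Coquelicot.
Open Scope R_scope.

Definition smooth (f : R -> R) : Prop :=
  forall (n : nat) (x : R), ex_derive (Derive_n f n) x.

(* h is the support function of an oval: smooth, 2pi-periodic, with radius of
   curvature h + h'' nowhere vanishing (positive, since h is a support function). *)
Definition oval_support (h : R -> R) : Prop :=
  smooth h /\ (forall s, h (s + 2 * PI) = h s) /\
  (forall s, h s + Derive_n h 2 s > 0).

Definition u (s : R) : R * R := (cos s, sin s).
Definition perp (p : R * R) : R * R := (- snd p, fst p).

(* O(s) = h(s) u(s) + h'(s) u'(s) *)
Definition oval_pt (h : R -> R) (s : R) : R * R :=
  (h s * cos s - Derive h s * sin s, h s * sin s + Derive h s * cos s).

Definition curve_length (c : R -> R * R) : R :=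
  RInt (fun s => sqrt ((Derive (fun t => fst (c t)) s) ^ 2 +
                       (Derive (fun t => snd (c t)) s) ^ 2)) 0 (2 * PI).

Definition oriented_area (c : R -> R * R) : R :=
  / 2 * RInt (fun s => fst (c s) * Derive (fun t => snd (c t)) s
                      - snd (c s) * Derive (fun t => fst (c t)) s) 0 (2 * PI).

Definition oval_length (h : R -> R) : R := curve_length (oval_pt h).
(* area of the region bounded by the (positively oriented) oval, by Green's formula *)
Definition oval_area (h : R -> R) : R := oriented_area (oval_pt h).

Definition avg_width (h : R -> R) : R := / PI * RInt h 0 (2 * PI).

Definition steiner_point (h : R -> R) : R * R :=
  (/ PI * RInt (fun s => h s * cos s) 0 (2 * PI),
   / PI * RInt (fun s => h s * sin s) 0 (2 * PI)).

Definition ang (k j : nat) : R := 2 * PI * INR j / INR k.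

Definition OPS (h : R -> R) (k : nat) (s : R) : R * R :=
  let term (j : nat) : R * R :=
    let p := oval_pt h (s + ang k j) in
    let q := perp p in
    (cos (ang k j) * fst p - sin (ang k j) * fst q,
     cos (ang k j) * snd p - sin (ang k j) * snd q) in
  (/ INR k * sum_n_m (fun j => fst (term j)) 1 k - / 2 * avg_width h * cos s,
   / INR k * sum_n_m (fun j => snd (term j)) 1 k - / 2 * avg_width h * sin s).

Definition OPS_area (h : R -> R) (k : nat) : R := oriented_area (OPS h k).

Definition on_support_line (h : R -> R) (k : nat) (s : R) (j : nat) (x : R * R) : Prop :=
  fst x * cos (s + ang k j) + snd x * sin (s + ang k j) = h (s + ang k j).

Definition dist2 (p q : R * R) : R :=
  sqrt ((fst p - fst q) ^ 2 + (snd p - snd q) ^ 2).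

(* polygon with vertices v 0, ..., v (k-1) (indices mod k) *)
Definition side_len (k : nat) (v : nat -> R * R) (j : nat) : R :=
  dist2 (v ((j + 1) mod k)%nat) (v j).

Definition vertex_angle (k : nat) (v : nat -> R * R) (j : nat) : R :=
  let a := v ((j + k - 1) mod k)%nat in
  let b := v ((j + 1) mod k)%nat in
  let ax := fst a - fst (v j) in let ay := snd a - snd (v j) in
  let bx := fst b - fst (v j) in let by_ := snd b - snd (v j) in
  acos ((ax * bx + ay * by_) /
        (sqrt (ax ^ 2 + ay ^ 2) * sqrt (bx ^ 2 + by_ ^ 2))).

Definition regular_polygon (k : nat) (v : nat -> R * R) : Prop :=
  forall i j : nat, (i < k)%nat -> (j < k)%nat ->
    side_len k v i = side_len k v j /\ vertex_angle k v i = vertex_angle k v j.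

Definition center_of_mass (k : nat) (v : nat -> R * R) : R * R :=
  (/ INR k * sum_n_m (fun j => fst (v j)) 0 (k - 1),
   / INR k * sum_n_m (fun j => snd (v j)) 0 (k - 1)).

(* Main.v *)
Require Import Defs.
From Stdlib Require Import Reals.
From Coquelicot Require Import Coquelicot.
From Stdlib Require Import Lra Lia FunctionalExtensionality.
Open Scope R_scope.

Definition I (f : R -> R) : R := RInt f 0 (2 * PI).
Definition cont (f : R -> R) : Prop := forall x, continuous f x.
Definition per (f : R -> R) : Prop := forall x, f (x + 2 * PI) = f x.

Lemma cP (f g : R -> R) x : continuous f x -> continuous g x -> continuous (fun y => f y + g y) x.
Proof. exact (continuous_plus f g x). Qed.
Lemma cMi (f g : R -> R) x : continuous f x -> continuous g x -> continuous (fun y => f y - g y) x.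
Proof. exact (continuous_minus f g x). Qed.
Lemma cM (f g : R -> R) x : continuous f x -> continuous g x -> continuous (fun y => f y * g y) x.
Proof. exact (continuous_mult f g x). Qed.
Lemma cO (f : R -> R) x : continuous f x -> continuous (fun y => - f y) x.
Proof. exact (continuous_opp f x). Qed.
Lemma cC (c x : R) : continuous (fun _ : R => c) x.
Proof. exact (continuous_const c x). Qed.
Lemma cId (x : R) : continuous (fun y : R => y) x.
Proof. exact (continuous_id x). Qed.
Lemma cCos (f : R -> R) x : continuous f x -> continuous (fun y => cos (f y)) x.
Proof. exact (continuous_cos_comp f x). Qed.
Lemma cSin (f : R -> R) x : continuous f x -> continuous (fun y => sin (f y)) x.
Proof. exact (continuous_sin_comp f x). Qed.
Lemma cComp (f g : R -> R) x : continuous g x -> cont f -> continuous (fun y => f (g y)) x.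
Proof. intros H1 H2. apply (continuous_comp g f x H1 (H2 _)). Qed.
Lemma cF (f : R -> R) x : cont f -> continuous f x.
Proof. intros H; apply H. Qed.

Ltac ctac1 := lazymatch goal with
 | |- continuous (fun _ => ?c) _ => apply cC
 | |- continuous (fun y => y) _ => apply cId
 | |- continuous (fun y => @?a y + @?b y) _ => apply cP
 | |- continuous (fun y => @?a y - @?b y) _ => apply cMi
 | |- continuous (fun y => @?a y * @?b y) _ => apply cM
 | |- continuous (fun y => - @?a y) _ => apply cO
 | |- continuous (fun y => cos (@?a y)) _ => apply cCos
 | |- continuous (fun y => sin (@?a y)) _ => apply cSin
 | |- continuous (fun y => ?f y) _ => first [ apply cF; assumption | assumption ]
 | |- continuous (fun y => ?f (@?a y)) _ => apply cComp; [|assumption]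
 | |- continuous cos _ => apply continuous_cos
 | |- continuous sin _ => apply continuous_sin
 | |- continuous ?f _ => first [ apply cF; assumption | assumption ]
 end.
Ltac ctac := repeat ctac1.


Lemma I_ex f : cont f -> ex_RInt f 0 (2*PI).
Proof. intros H; apply (@ex_RInt_continuous R_CompleteNormedModule); intros; apply H. Qed.
Lemma ex_gen f a b : cont f -> ex_RInt f a b.
Proof. intros H; apply (@ex_RInt_continuous R_CompleteNormedModule); intros; apply H. Qed.

Lemma I_plus f g : cont f -> cont g -> I (fun x => f x + g x) = I f + I g.
Proof. intros; unfold I; apply (RInt_plus f g); apply I_ex; auto. Qed.
Lemma I_minus f g : cont f -> cont g -> I (fun x => f x - g x) = I f - I g.
Proof. intros; unfold I; apply (RInt_minus f g); apply I_ex; auto. Qed.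
Lemma I_scal f c : cont f -> I (fun x => c * f x) = c * I f.
Proof. intros; unfold I; apply (RInt_scal f); apply I_ex; auto. Qed.
Lemma I_const c : I (fun _ => c) = 2 * PI * c.
Proof. unfold I; rewrite RInt_const. unfold scal; simpl; unfold mult; simpl; ring. Qed.
Lemma I_ext f g : (forall x, f x = g x) -> I f = I g.
Proof. intros H; unfold I; apply RInt_ext; intros; apply H. Qed.

Lemma RInt_shift f a b c : cont f -> RInt (fun x => f (x + c)) a b = RInt f (a + c) (b + c).
Proof.
  intros H. replace (a + c) with (1 * a + c) by ring. replace (b + c) with (1 * b + c) by ring.
  rewrite <- (RInt_comp_lin f 1 c a b).
  - apply RInt_ext; intros. unfold scal; simpl; unfold mult; simpl. rewrite Rmult_1_l, Rmult_1_l. reflexivity.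
  - apply ex_gen; auto.
Qed.

Lemma RInt_period f a : cont f -> per f -> RInt f a (a + 2*PI) = I f.
Proof.
  intros Hc Hp. unfold I.
  rewrite <- (RInt_Chasles f a 0 (a + 2*PI)) by (apply ex_gen; auto).
  rewrite <- (RInt_Chasles f 0 (2*PI) (a + 2*PI)) by (apply ex_gen; auto).
  assert (RInt f (2*PI) (a + 2*PI) = RInt f 0 a).
  { replace (2*PI) with (0 + 2*PI) at 1 by ring. replace (a + 2*PI) with (a + 2*PI) by ring.
    rewrite <- RInt_shift by auto. apply RInt_ext; intros; apply Hp. }
  rewrite H. rewrite <- (opp_RInt_swap f 0 a) by (apply ex_gen; auto).
  unfold plus, opp; simpl. ring.
Qed.

Lemma I_shift f c : cont f -> per f -> I (fun x => f (x + c)) = I f.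
Proof.
  intros Hc Hp. unfold I at 1. rewrite RInt_shift by auto.
  replace (2*PI + c) with (c + 2*PI) by ring. replace (0 + c) with c by ring.
  apply RInt_period; auto.
Qed.

Definition Dv (f f' : R -> R) : Prop := forall x, is_derive f x (f' x).

Lemma D_cont f f' : Dv f f' -> cont f.
Proof. intros H x. apply (@ex_derive_continuous R_AbsRing R_NormedModule). exists (f' x). apply H. Qed.

Lemma D_shift f f' c x : Dv f f' -> is_derive (fun y => f (y + c)) x (f' (x + c)).
Proof.
  intros H. assert (H1 := is_derive_comp f (fun y => y + c) x (f' (x + c)) 1 (H _)).
  assert (H2 : is_derive (fun y : R => y + c) x 1).
  { auto_derive; auto; ring. }
  specialize (H1 H2). unfold scal in H1; simpl in H1; unfold mult in H1; simpl in H1.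
  rewrite Rmult_1_l in H1. exact H1.
Qed.

Lemma D_uniq f f' g x l : Dv f f' -> (forall y, f y = g y) -> is_derive g x l -> f' x = l.
Proof.
  intros H E Hg. rewrite <- (is_derive_unique g x l Hg).
  symmetry; apply is_derive_unique. apply (is_derive_ext f); auto.
Qed.

Lemma per_D f f' : Dv f f' -> per f -> per f'.
Proof.
  intros H P x. symmetry. apply (D_uniq f f' (fun y => f (y + 2*PI)) x).
  - auto.
  - intros; rewrite P; auto.
  - apply D_shift; auto.
Qed.

Lemma I_D f f' : Dv f f' -> cont f' -> per f -> I f' = 0.
Proof.
  intros H C P. unfold I. rewrite (is_RInt_unique f' 0 (2*PI) (minus (f (2*PI)) (f 0))).
  - unfold minus, plus, opp; simpl. replace (2*PI) with (0 + 2*PI) by ring. rewrite P. ring.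
  - apply (@is_RInt_derive R_CompleteNormedModule); intros; auto.
Qed.

Lemma D_mult f f' g g' : Dv f f' -> Dv g g' -> Dv (fun x => f x * g x) (fun x => f' x * g x + f x * g' x).
Proof.
  intros Hf Hg x. apply (is_derive_mult f g x (f' x) (g' x) (Hf x) (Hg x)).
  intros; unfold mult; simpl; ring.
Qed.

Lemma IBP f f' g g' : Dv f f' -> Dv g g' -> cont f' -> cont g' -> per f -> per g ->
  I (fun x => f' x * g x) = - I (fun x => f x * g' x).
Proof.
  intros Hf Hg Cf Cg Pf Pg.
  assert (Cf0 := D_cont _ _ Hf). assert (Cg0 := D_cont _ _ Hg).
  assert (I (fun x => f' x * g x + f x * g' x) = 0).
  { apply (I_D (fun x => f x * g x)). apply D_mult; auto. intro; ctac.
    intro x; rewrite Pf, Pg; auto. }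
  rewrite I_plus in H by (intro; ctac). lra.
Qed.

Definition smooth_per (h : R -> R) := smooth h /\ per h.

Lemma sm_D h n : smooth h -> Dv (Derive_n h n) (Derive_n h (S n)).
Proof. intros H x. apply Derive_correct. apply H. Qed.

Lemma sm_cont h n : smooth h -> cont (Derive_n h n).
Proof. intros H. apply (D_cont _ _ (sm_D h n H)). Qed.

Lemma sm_per h n : smooth h -> per h -> per (Derive_n h n).
Proof.
  intros H P. induction n. { exact P. }
  apply (per_D _ _ (sm_D h n H)); auto.
Qed.

Lemma exR (f : R -> R) a b : (forall x, a <= x <= b -> continuous f x) -> a <= b -> ex_RInt f a b.
Proof.
  intros H Hab. apply (@ex_RInt_continuous R_CompleteNormedModule).
  rewrite Rmin_left, Rmax_right by lra. auto.
Qed.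

Lemma dirichlet F F' a mu : Dv F F' -> cont F' -> F a = 0 -> F (a + PI) = 0 -> 0 < mu < 1 ->
  mu * mu * RInt (fun x => F x * F x) a (a + PI) <= RInt (fun x => F' x * F' x) a (a + PI).
Proof.
  intros HD HC Fa Fb Hmu.
  assert (HF := D_cont _ _ HD).
  assert (Hpi := PI_RGT_0).
  set (c0 := a + PI / 2).
  assert (Hcos : forall x, a <= x <= a + PI -> 0 < cos (mu * (x - c0))).
  { intros x Hx. apply cos_gt_0; unfold c0; nra. }
  set (t := fun x => sin (mu * (x - c0)) / cos (mu * (x - c0))).
  set (K := fun x => - mu * (F x * F x) * t x).
  set (G := fun x => F' x * F' x - mu * mu * (F x * F x) - (F' x + mu * t x * F x) * (F' x + mu * t x * F x)).
  assert (Ht : forall x, a <= x <= a + PI -> continuous t x).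
  { intros x Hx. apply (@ex_derive_continuous R_AbsRing R_NormedModule). unfold t.
    auto_derive. specialize (Hcos x Hx). unfold Rminus in *. lra. }
  assert (HK : forall x, Rmin a (a + PI) <= x <= Rmax a (a + PI) -> is_derive K x (G x)).
  { rewrite Rmin_left, Rmax_right by lra. intros x Hx. specialize (Hcos x Hx).
    unfold K, G, t. auto_derive.
    - unfold Rminus in *. repeat split; try (exists (F' x); apply HD); try (apply Rgt_not_eq; exact Hcos).
    - assert (EE : Derive (fun y : R => F y) x = F' x) by (apply is_derive_unique; apply HD). rewrite EE. unfold Rminus in *. field. apply Rgt_not_eq; exact Hcos. }
  assert (HG : forall x, Rmin a (a + PI) <= x <= Rmax a (a + PI) -> continuous G x).
  { rewrite Rmin_left, Rmax_right by lra. intros x Hx. specialize (Ht x Hx). unfold G. ctac. }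
  assert (IG := is_RInt_unique _ _ _ _ (@is_RInt_derive R_CompleteNormedModule K G a (a + PI) HK HG)).
  assert (IG0 : RInt G a (a + PI) = 0).
  { rewrite IG. unfold minus, plus, opp; simpl. unfold K. rewrite Fa, Fb. ring. }
  rewrite Rmin_left, Rmax_right in HG by lra.
  set (sq := fun x => (F' x + mu * t x * F x) * (F' x + mu * t x * F x)).
  assert (Hsq : forall x, a <= x <= a + PI -> continuous sq x).
  { intros x Hx. specialize (Ht x Hx). unfold sq. ctac. }
  assert (E : RInt (fun x => F' x * F' x) a (a + PI) =
              RInt (fun x => plus (plus (G x) (scal (mu * mu) (F x * F x))) (sq x)) a (a + PI)).
  { apply RInt_ext. intros. unfold G, sq, plus, scal; simpl; unfold mult; simpl. ring. }
  assert (eG : ex_RInt G a (a + PI)) by (apply exR; [exact HG | lra]).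
  assert (eF : ex_RInt (fun x => F x * F x) a (a + PI)) by (apply exR; [intros; ctac | lra]).
  assert (eS : ex_RInt sq a (a + PI)) by (apply exR; [exact Hsq | lra]).
  assert (eGF : ex_RInt (fun x => plus (G x) (scal (mu * mu) (F x * F x))) a (a + PI)).
  { apply (@ex_RInt_plus R_CompleteNormedModule); auto. apply (@ex_RInt_scal R_CompleteNormedModule); auto. }
  rewrite E.
  rewrite (@RInt_plus R_CompleteNormedModule (fun x => plus (G x) (scal (mu*mu) (F x * F x))) sq) by auto.
  rewrite (@RInt_plus R_CompleteNormedModule G (fun x => scal (mu*mu) (F x*F x))) by (auto; apply (@ex_RInt_scal R_CompleteNormedModule); auto).
  rewrite (@RInt_scal R_CompleteNormedModule (fun x => F x * F x)) by auto.
  rewrite IG0. unfold plus, scal; simpl; unfold mult; simpl.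
  assert (0 <= RInt sq a (a + PI)).
  { apply RInt_ge_0. lra. auto. intros; unfold sq; apply Rle_0_sqr. }
  lra.
Qed.

Lemma lim_mu X Y : (forall mu, 0 < mu < 1 -> mu * mu * X <= Y) -> 0 <= Y -> X <= Y.
Proof.
  intros H HY. destruct (Rle_or_lt X Y) as [|HXY]; auto.
  assert (HX : 0 < X) by lra.
  set (q := Y / X).
  assert (Hq : 0 <= q < 1).
  { unfold q; split. apply Rdiv_le_0_compat; lra. apply (Rmult_lt_reg_r X); [lra|]. field_simplify; lra. }
  specialize (H ((1 + q) / 2) ltac:(lra)).
  assert (Y = q * X) by (unfold q; field; lra).
  nra.
Qed.

Lemma Dv_minus_const f f' m : Dv f f' -> Dv (fun x => f x - m) f'.
Proof.
  intros H x.
  assert (H1 := @is_derive_minus R_AbsRing R_NormedModule f (fun _ : R => m) x (f' x) zero (H x) (is_derive_const m x)).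
  replace (f' x) with (minus (f' x) (@zero R_AbelianGroup)) by (unfold minus, plus, opp, zero; simpl; ring).
  apply (is_derive_ext _ _ x _ (fun t => eq_refl) H1).
Qed.

Lemma wirtinger f f' : Dv f f' -> cont f' -> per f -> I f = 0 ->
  I (fun x => f x * f x) <= I (fun x => f' x * f' x).
Proof.
  intros HD HC P I0.
  assert (Cf := D_cont _ _ HD).
  assert (Hpi := PI_RGT_0).
  set (g := fun x => f x - f (x + PI)).
  assert (Cg : forall x, continuous g x).
  { intros x. unfold g. apply cMi. apply Cf. apply cComp; [ctac | exact Cf]. }
  assert (gPI : g PI = - g 0).
  { unfold g. replace (PI + PI) with (0 + 2 * PI) by ring. rewrite P.
    replace (0 + PI) with PI by ring. ring. }
  destruct (IVT_gen_consistent g 0 PI 0 Cg) as [a [Ha Hga]].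
  { rewrite gPI. destruct (Rle_or_lt 0 (g 0)).
    - rewrite Rmin_right, Rmax_left by lra. lra.
    - rewrite Rmin_left, Rmax_right by lra. lra. }
  set (m := f a).
  set (F := fun x => f x - m).
  assert (HF : Dv F f') by (apply Dv_minus_const; auto).
  assert (CF := D_cont _ _ HF).
  assert (Fa : F a = 0) by (unfold F, m; ring).
  assert (Fb : F (a + PI) = 0) by (unfold F, m; unfold g in Hga; lra).
  assert (Fc : F (a + PI + PI) = 0).
  { unfold F, m. replace (a + PI + PI) with (a + 2 * PI) by ring. rewrite P. ring. }
  assert (PF2 : per (fun x => F x * F x)).
  { intros x. unfold F. rewrite P. auto. }
  assert (Pf'2 : per (fun x => f' x * f' x)).
  { intros x. rewrite (per_D f f' HD P). auto. }
  assert (Key : forall mu, 0 < mu < 1 -> mu * mu * I (fun x => F x * F x) <= I (fun x => f' x * f' x)).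
  { intros mu Hmu.
    assert (H1 := dirichlet F f' a mu HF HC Fa Fb Hmu).
    assert (H2 := dirichlet F f' (a + PI) mu HF HC Fb Fc Hmu).
    rewrite <- (RInt_period (fun x => F x * F x) a) by (auto; intro; ctac).
    rewrite <- (RInt_period (fun x => f' x * f' x) a) by (auto; intro; ctac).
    replace (a + 2 * PI) with (a + PI + PI) by ring.
    rewrite <- (@RInt_Chasles R_CompleteNormedModule (fun x => F x * F x) a (a + PI) (a + PI + PI)) by (apply ex_gen; intro; ctac).
    rewrite <- (@RInt_Chasles R_CompleteNormedModule (fun x => f' x * f' x) a (a + PI) (a + PI + PI)) by (apply ex_gen; intro; ctac).
    unfold plus; simpl. lra. }
  assert (L := lim_mu _ _ Key).
  assert (Hpos : 0 <= I (fun x => f' x * f' x)).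
  { unfold I. apply RInt_ge_0. lra. apply ex_gen; intro; ctac. intros; apply Rle_0_sqr. }
  specialize (L Hpos).
  assert (E : I (fun x => F x * F x) = I (fun x => f x * f x) + 2 * PI * (m * m)).
  { rewrite (I_ext (fun x => F x * F x) (fun x => (f x * f x + (-2 * m) * f x) + m * m)).
    2: { intros; unfold F; ring. }
    rewrite I_plus, I_plus, I_scal, I_const, I0 by (intro; ctac). ring. }
  assert (0 <= m * m) by apply Rle_0_sqr.
  nra.
Qed.

Lemma Dv_plus f f' g g' : Dv f f' -> Dv g g' -> Dv (fun x => f x + g x) (fun x => f' x + g' x).
Proof.
  intros Hf Hg x. apply (@is_derive_plus R_AbsRing R_NormedModule f g x (f' x) (g' x) (Hf x) (Hg x)).
Qed.

Lemma Dv_scal f f' c : Dv f f' -> Dv (fun x => c * f x) (fun x => c * f' x).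
Proof.
  intros Hf x. apply (is_derive_scal f x c (f' x) (Hf x)).
Qed.

Lemma const_of_D0 (E : R -> R) : (forall x, is_derive E x 0) -> forall x, E x = E 0.
Proof.
  intros H x. destruct (Rtotal_order x 0) as [Hx|[Hx|Hx]].
  - apply (@eq_is_derive R_NormedModule E x 0); [intros; apply H | lra].
  - subst; reflexivity.
  - symmetry; apply (@eq_is_derive R_NormedModule E 0 x); [intros; apply H | lra].
Qed.

Lemma ode_uniq r r1 r2 : Dv r r1 -> Dv r1 r2 -> (forall x, r2 x = - r x) ->
  forall x, r x = r 0 * cos x + r1 0 * sin x.
Proof.
  intros H1 H2 H3.
  set (A := r 0). set (B := r1 0).
  set (e := fun x => r x - A * cos x - B * sin x).
  set (e' := fun x => r1 x + A * sin x - B * cos x).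
  set (En := fun x => e x * e x + e' x * e' x).
  assert (HE : forall x, is_derive En x 0).
  { intros x. unfold En, e, e'. auto_derive.
    - repeat split; try (exists (r1 x); apply H1); try (exists (r2 x); apply H2).
    - assert (E1 : Derive (fun y : R => r y) x = r1 x) by (apply is_derive_unique; apply H1).
      assert (E2 : Derive (fun y : R => r1 y) x = r2 x) by (apply is_derive_unique; apply H2).
      rewrite E1, E2, H3. ring. }
  intros x. assert (C := const_of_D0 En HE x).
  assert (E0 : En 0 = 0).
  { unfold En, e, e', A, B. rewrite cos_0, sin_0. ring. }
  rewrite E0 in C. unfold En in C.
  assert (e x = 0) by nra. unfold e in H. fold A B. lra.
Qed.

Lemma I_zero g : cont g -> per g -> (forall x, 0 <= g x) -> I g = 0 -> forall x, g x = 0.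
Proof.
  intros C P Pos I0 x0.
  destruct (Rle_lt_or_eq_dec 0 (g x0) (Pos x0)) as [Hlt|]; [|auto].
  exfalso.
  assert (Hpi := PI_RGT_0).
  set (eps := mkposreal (g x0 / 2) ltac:(lra)).
  destruct (C x0 (ball (g x0) eps) (locally_ball _ eps)) as [dl Hd].
  set (d := Rmin (dl / 2) 1).
  assert (Hd0 : 0 < d) by (unfold d; apply Rmin_glb_lt; [destruct dl; simpl; lra | lra]).
  assert (Hd1 : d <= 1) by apply Rmin_r.
  assert (Hd2 : d < dl) by (unfold d; assert (Rmin (dl/2) 1 <= dl/2) by apply Rmin_l; destruct dl; simpl in *; lra).
  assert (Hpos : forall y, x0 - d <= y <= x0 + d -> g x0 / 2 < g y).
  { intros y Hy. assert (B : ball x0 dl y).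
    { unfold ball; simpl; unfold AbsRing_ball, abs, minus, plus, opp; simpl. apply Rabs_def1; lra. }
    specialize (Hd y B). unfold ball in Hd; simpl in Hd; unfold AbsRing_ball, abs, minus, plus, opp in Hd; simpl in Hd.
    apply Rabs_def2 in Hd. simpl in Hd. lra. }
  assert (E := RInt_period g (x0 - PI) C P).
  replace (x0 - PI + 2 * PI) with (x0 + PI) in E by ring.
  assert (PI_gt_3 : 3 < PI) by (assert (T := PI2_3_2); lra).
  rewrite <- (@RInt_Chasles R_CompleteNormedModule g (x0 - PI) (x0 - d) (x0 + PI)) in E by (apply ex_gen; auto).
  rewrite <- (@RInt_Chasles R_CompleteNormedModule g (x0 - d) (x0 + d) (x0 + PI)) in E by (apply ex_gen; auto).
  unfold plus in E; simpl in E.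
  assert (R1 : 0 <= RInt g (x0 - PI) (x0 - d)) by (apply RInt_ge_0; [lra | apply ex_gen; auto | intros; auto]).
  assert (R3 : 0 <= RInt g (x0 + d) (x0 + PI)) by (apply RInt_ge_0; [lra | apply ex_gen; auto | intros; auto]).
  assert (R2 : RInt (fun _ => g x0 / 2) (x0 - d) (x0 + d) < RInt g (x0 - d) (x0 + d)).
  { apply RInt_lt. lra. intros; auto. intros; apply cC. intros; apply Hpos; lra. }
  rewrite RInt_const in R2. unfold scal in R2; simpl in R2; unfold mult in R2; simpl in R2.
  unfold I in *. assert (0 < (x0 + d - (x0 - d)) * (g x0 / 2)) by (apply Rmult_lt_0_compat; lra). lra.
Qed.

Lemma I_sq_expand a b t : cont a -> cont b ->
  I (fun x => (a x + t * b x) * (a x + t * b x)) =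
  I (fun x => a x * a x) + 2 * t * I (fun x => a x * b x) + t * t * I (fun x => b x * b x).
Proof.
  intros Ca Cb.
  rewrite (I_ext _ (fun x => (a x * a x + (2 * t) * (a x * b x)) + (t * t) * (b x * b x))) by (intros; ring).
  rewrite I_plus, I_plus, I_scal, I_scal by (intro; ctac). ring.
Qed.

Lemma wirt_eq r r1 r2 r3 : Dv r r1 -> Dv r1 r2 -> Dv r2 r3 -> cont r3 -> per r -> I r = 0 ->
  I (fun x => r1 x * r1 x) = I (fun x => r x * r x) -> forall x, r2 x = - r x.
Proof.
  intros D1 D2 D3 C3 Pr Ir Q0.
  assert (Cr := D_cont _ _ D1). assert (Cr1 := D_cont _ _ D2). assert (Cr2 := D_cont _ _ D3).
  assert (Pr1 := per_D _ _ D1 Pr). assert (Pr2 := per_D _ _ D2 Pr1).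
  set (phi := fun x => r2 x + r x). set (phi' := fun x => r3 x + r1 x).
  assert (Dphi : Dv phi phi') by (apply Dv_plus; auto).
  assert (Cphi : cont phi) by (intro; unfold phi; ctac).
  assert (Cphi' : cont phi') by (intro; unfold phi'; ctac).
  assert (Pphi : per phi) by (intro; unfold phi; rewrite Pr, Pr2; auto).
  assert (Ir2 : I r2 = 0) by (apply (I_D r1 r2); auto).
  assert (Iphi : I phi = 0) by (unfold phi; rewrite I_plus by auto; lra).
  assert (Wphi := wirtinger phi phi' Dphi Cphi' Pphi Iphi).
  set (B := I (fun x => r1 x * phi' x) - I (fun x => r x * phi x)).
  set (Q := I (fun x => phi' x * phi' x) - I (fun x => phi x * phi x)).
  assert (Hall : forall t, 0 <= 2 * t * B + t * t * Q).
  { intros t.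
    assert (Dpsi : Dv (fun x => r x + t * phi x) (fun x => r1 x + t * phi' x)).
    { apply Dv_plus; auto. apply Dv_scal; auto. }
    assert (Ipsi : I (fun x => r x + t * phi x) = 0).
    { rewrite I_plus, I_scal by (intro; ctac). rewrite Ir, Iphi. ring. }
    assert (Ppsi : per (fun x => r x + t * phi x)) by (intro; rewrite Pr, Pphi; auto).
    assert (W := wirtinger _ _ Dpsi ltac:(intro; ctac) Ppsi Ipsi).
    cbv beta in W. rewrite (I_sq_expand r phi t), (I_sq_expand r1 phi' t) in W by auto.
    unfold B, Q. lra. }
  assert (HQ : 0 <= Q) by (unfold Q; lra).
  assert (HB : B = 0).
  { specialize (Hall (- B / (Q + 1))).
    assert (E : 2 * (- B / (Q + 1)) * B + (- B / (Q + 1)) * (- B / (Q + 1)) * Q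
               = - (B * B) * (Q + 2) / ((Q + 1) * (Q + 1))) by (field; lra).
    rewrite E in Hall.
    assert (0 < (Q + 1) * (Q + 1)) by nra.
    assert (0 <= - (B * B) * (Q + 2)).
    { apply (Rmult_le_reg_r (/ ((Q + 1) * (Q + 1)))). apply Rinv_0_lt_compat; lra.
      rewrite Rmult_0_l. exact Hall. }
    nra. }
  assert (IBPr := IBP r1 r2 phi phi' D2 Dphi Cr2 Cphi' Pr1 Pphi).
  assert (E2 : I (fun x => phi x * phi x) = I (fun x => r2 x * phi x) + I (fun x => r x * phi x)).
  { rewrite <- I_plus by (intro; ctac). apply I_ext. intros; unfold phi; ring. }
  assert (Z : I (fun x => phi x * phi x) = 0) by (unfold B in HB; lra).
  assert (Z2 := I_zero (fun x => phi x * phi x) ltac:(intro; ctac) ltac:(intro; rewrite Pphi; auto)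
                 ltac:(intro; apply Rle_0_sqr) Z).
  intros x. specialize (Z2 x). simpl in Z2. assert (phi x = 0) by nra. unfold phi in H. lra.
Qed.

Lemma s10 (a : nat -> R) : sum_n_m a 1 0 = 0.
Proof. apply (@sum_n_m_zero R_AbelianMonoid). lia. Qed.
Lemma s1S (a : nat -> R) n : sum_n_m a 1 (S n) = sum_n_m a 1 n + a (S n).
Proof. rewrite sum_n_Sm by lia. reflexivity. Qed.

Lemma sumnm_mult_l (c : R) (a : nat -> R) m n : sum_n_m (fun j => c * a j) m n = c * sum_n_m a m n.
Proof. apply (@sum_n_m_mult_l R_Ring). Qed.

Lemma sumnm_plus (a b : nat -> R) m n : sum_n_m (fun j => a j + b j) m n = sum_n_m a m n + sum_n_m b m n.
Proof. apply (@sum_n_m_plus R_AbelianMonoid). Qed.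

Lemma sumF_cont (F : nat -> R -> R) n : (forall j, cont (F j)) -> cont (fun s => sum_n_m (fun j => F j s) 1 n).
Proof.
  intros H. induction n; intro x.
  - apply (continuous_ext (fun _ => 0)). intros; rewrite s10; auto. apply cC.
  - apply (continuous_ext (fun s => sum_n_m (fun j => F j s) 1 n + F (S n) s)).
    intros; rewrite s1S; auto. apply cP. apply IHn. apply H.
Qed.

Lemma sumF_Dv (F F' : nat -> R -> R) n : (forall j, Dv (F j) (F' j)) ->
  Dv (fun s => sum_n_m (fun j => F j s) 1 n) (fun s => sum_n_m (fun j => F' j s) 1 n).
Proof.
  intros H. induction n; intro x.
  - rewrite s10. apply (is_derive_ext (fun _ => 0)). intros; rewrite s10; auto. apply (is_derive_const 0).
  - rewrite s1S. apply (is_derive_ext (fun s => sum_n_m (fun j => F j s) 1 n + F (S n) s)).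
    intros; rewrite s1S; auto. apply (Dv_plus _ _ _ _ IHn (H (S n))).
Qed.

Lemma sumF_I (F : nat -> R -> R) n : (forall j, cont (F j)) ->
  I (fun s => sum_n_m (fun j => F j s) 1 n) = sum_n_m (fun j => I (F j)) 1 n.
Proof.
  intros H. induction n.
  - rewrite s10. rewrite (I_ext _ (fun _ => 0)) by (intros; apply s10). rewrite I_const. ring.
  - rewrite s1S. rewrite (I_ext _ (fun s => sum_n_m (fun j => F j s) 1 n + F (S n) s)) by (intros; apply s1S).
    rewrite I_plus. rewrite IHn. auto. apply sumF_cont; auto. apply H.
Qed.

Definition avgk (k : nat) (f : R -> R) (s : R) : R := / INR k * sum_n_m (fun j => f (s + ang k j)) 1 k.

Lemma ang_S k j : (0 < k)%nat -> ang k (S j) = ang k j + ang k 1.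
Proof. intros. unfold ang. rewrite S_INR. simpl. assert (0 < INR k) by (apply lt_0_INR; lia). field. lra. Qed.
Lemma ang_k k : (0 < k)%nat -> ang k k = 2 * PI.
Proof. intros. unfold ang. assert (0 < INR k) by (apply lt_0_INR; lia). field. lra. Qed.
Lemma ang_0 k : ang k 0 = 0.
Proof. unfold ang. simpl. unfold Rdiv. ring. Qed.

Lemma avg_cont k f : cont f -> cont (avgk k f).
Proof.
  intros C x. unfold avgk. apply cM. apply cC.
  apply (sumF_cont (fun j s => f (s + ang k j))). intros j y. ctac.
Qed.

Lemma avg_Dv k f f' : Dv f f' -> Dv (avgk k f) (avgk k f').
Proof.
  intros H x. unfold avgk. apply is_derive_scal.
  apply (sumF_Dv (fun j s => f (s + ang k j)) (fun j s => f' (s + ang k j))).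
  intros j y. apply D_shift; auto.
Qed.

Lemma avg_per k f : per f -> per (avgk k f).
Proof.
  intros P x. unfold avgk. f_equal. apply sum_n_m_ext. intros j.
  replace (x + 2 * PI + ang k j) with (x + ang k j + 2 * PI) by ring. apply P.
Qed.

Lemma avg_I k f : (0 < k)%nat -> cont f -> per f -> I (avgk k f) = I f.
Proof.
  intros Hk C P. unfold avgk. rewrite I_scal.
  2: { apply (sumF_cont (fun j s => f (s + ang k j))). intros j y; ctac. }
  rewrite (sumF_I (fun j s => f (s + ang k j))) by (intros j y; ctac).
  rewrite (sum_n_m_ext _ (fun _ => I f)) by (intros; apply I_shift; auto).
  rewrite sum_n_m_const. replace (S k - 1)%nat with k by lia.
  assert (0 < INR k) by (apply lt_0_INR; lia). field. lra.
Qed.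

Lemma avg_shift1 k f s : (0 < k)%nat -> per f -> avgk k f (s + ang k 1) = avgk k f s.
Proof.
  intros Hk P. unfold avgk. f_equal.
  rewrite (sum_n_m_ext _ (fun j => f (s + ang k (S j)))).
  2: { intros j. rewrite (ang_S k j) by auto. f_equal. ring. }
  rewrite (sum_n_m_S (fun j => f (s + ang k j)) 1 k).
  rewrite (sum_Sn_m (fun j => f (s + ang k j)) 1 k) by lia.
  rewrite (sum_n_Sm (fun j => f (s + ang k j)) 2 k) by lia.
  unfold plus; simpl.
  assert (E : f (s + ang k (S k)) = f (s + ang k 1)).
  { rewrite (ang_S k k), ang_k by auto. replace (s + (2 * PI + ang k 1)) with (s + ang k 1 + 2 * PI) by ring. apply P. }
  rewrite E. ring.
Qed.

Lemma avg_shift k f s j : (0 < k)%nat -> per f -> avgk k f (s + ang k j) = avgk k f s.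
Proof.
  intros Hk P. induction j.
  - rewrite ang_0, Rplus_0_r. auto.
  - rewrite (ang_S k j) by auto.
    replace (s + (ang k j + ang k 1)) with (s + ang k j + ang k 1) by ring.
    rewrite avg_shift1 by auto. auto.
Qed.

Lemma avg_orth k f : (0 < k)%nat -> cont f -> per f ->
  I (fun x => avgk k f x * (f x - avgk k f x)) = 0.
Proof.
  intros Hk C P.
  assert (CG := avg_cont k f C). assert (PG := avg_per k f P).
  rewrite (I_ext _ (fun x => avgk k f x * f x - avgk k f x * avgk k f x)) by (intros; ring).
  rewrite I_minus by (intro; ctac).
  assert (E : forall x, avgk k f x * avgk k f x =
     / INR k * sum_n_m (fun j => avgk k f x * f (x + ang k j)) 1 k).
  { intros x. unfold avgk at 2. rewrite sumnm_mult_l. ring. }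
  rewrite (I_ext _ _ E). rewrite I_scal.
  2: { apply (sumF_cont (fun j x => avgk k f x * f (x + ang k j))). intros j y; ctac. }
  rewrite (sumF_I (fun j x => avgk k f x * f (x + ang k j))) by (intros j y; ctac).
  rewrite (sum_n_m_ext _ (fun _ => I (fun x => avgk k f x * f x))).
  2: { intros j. 
       assert (Cp : cont (fun x => avgk k f x * f x)) by (intro; ctac).
       assert (Pp : per (fun x => avgk k f x * f x)) by (intro; rewrite P, PG; auto).
       rewrite <- (I_shift (fun x => avgk k f x * f x) (ang k j) Cp Pp).
       apply I_ext. intros x. rewrite avg_shift by auto. auto. }
  rewrite sum_n_m_const. replace (S k - 1)%nat with k by lia.
  assert (0 < INR k) by (apply lt_0_INR; lia). field_simplify; [ring | lra].
Qed.

Lemma tele_cos k x m d : (0 < k)%nat ->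
  2 * sin (PI / INR k) * sum_n_m (fun j => cos (x + ang k j)) m (m + d)
  = sin (x + ang k (m + d) + PI / INR k) - sin (x + ang k m - PI / INR k).
Proof.
  intros Hk. assert (0 < INR k) by (apply lt_0_INR; lia).
  assert (A : forall j, ang k (S j) = ang k j + 2 * (PI / INR k)).
  { intros j. unfold ang. rewrite S_INR. field. lra. }
  induction d.
  - rewrite Nat.add_0_r, sum_n_n.
    replace (x + ang k m + PI / INR k) with ((x + ang k m) + PI / INR k) by ring.
    replace (x + ang k m - PI / INR k) with ((x + ang k m) - PI / INR k) by ring.
    rewrite sin_plus, sin_minus. ring.
  - replace (m + S d)%nat with (S (m + d)) by lia.
    rewrite sum_n_Sm by lia. unfold plus; simpl.
    rewrite Rmult_plus_distr_l, IHd, A.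
    set (e := PI / INR k). set (y := x + ang k (m + d)).
    replace (x + (ang k (m + d) + 2 * e)) with (y + 2 * e) by (unfold y; ring).
    replace (y + e) with ((y + 2 * e) - e) by ring.
    replace (y + 2 * e + e) with ((y + 2 * e) + e) by ring.
    set (c := y + 2 * e).
    rewrite sin_plus, sin_minus. ring.
Qed.

Lemma tele_sin k x m d : (0 < k)%nat ->
  2 * sin (PI / INR k) * sum_n_m (fun j => sin (x + ang k j)) m (m + d)
  = cos (x + ang k m - PI / INR k) - cos (x + ang k (m + d) + PI / INR k).
Proof.
  intros Hk. assert (0 < INR k) by (apply lt_0_INR; lia).
  assert (A : forall j, ang k (S j) = ang k j + 2 * (PI / INR k)).
  { intros j. unfold ang. rewrite S_INR. field. lra. }
  induction d.
  - rewrite Nat.add_0_r, sum_n_n.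
    replace (x + ang k m + PI / INR k) with ((x + ang k m) + PI / INR k) by ring.
    replace (x + ang k m - PI / INR k) with ((x + ang k m) - PI / INR k) by ring.
    rewrite cos_plus, cos_minus. ring.
  - replace (m + S d)%nat with (S (m + d)) by lia.
    rewrite sum_n_Sm by lia. unfold plus; simpl.
    rewrite Rmult_plus_distr_l, IHd, A.
    set (e := PI / INR k). set (y := x + ang k (m + d)).
    replace (x + (ang k (m + d) + 2 * e)) with (y + 2 * e) by (unfold y; ring).
    replace (y + e) with ((y + 2 * e) - e) by ring.
    replace (y + 2 * e + e) with ((y + 2 * e) + e) by ring.
    set (c := y + 2 * e).
    rewrite (cos_plus c e), (cos_minus c e). ring.
Qed.

Lemma sinPIk k : (2 < k)%nat -> 0 < sin (PI / INR k).
Proof.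
  intros Hk. assert (1 < INR k) by (apply lt_1_INR; lia). assert (Hpi := PI_RGT_0).
  apply sin_gt_0. apply Rdiv_lt_0_compat; lra.
  apply (Rmult_lt_reg_r (INR k)); [lra|]. field_simplify; nra.
Qed.

Lemma sum_cos0 k x : (2 < k)%nat -> sum_n_m (fun j => cos (x + ang k j)) 0 (k - 1) = 0.
Proof.
  intros Hk. assert (Hs := sinPIk k Hk).
  assert (T := tele_cos k x 0 (k - 1) ltac:(lia)). simpl in T.
  assert (E : sin (x + ang k (k - 1) + PI / INR k) = sin (x + ang k 0 - PI / INR k)).
  { rewrite ang_0. assert (0 < INR k) by (apply lt_0_INR; lia).
    replace (x + ang k (k - 1) + PI / INR k) with ((x + 0 - PI / INR k) + 2 * INR 1 * PI).
    apply sin_period. unfold ang. rewrite minus_INR by lia. simpl. field. lra. }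
  rewrite E in T. apply (Rmult_eq_reg_l (2 * sin (PI / INR k))); [|lra]. rewrite T. ring.
Qed.

Lemma sum_sin0 k x : (2 < k)%nat -> sum_n_m (fun j => sin (x + ang k j)) 0 (k - 1) = 0.
Proof.
  intros Hk. assert (Hs := sinPIk k Hk).
  assert (T := tele_sin k x 0 (k - 1) ltac:(lia)). simpl in T.
  assert (E : cos (x + ang k (k - 1) + PI / INR k) = cos (x + ang k 0 - PI / INR k)).
  { rewrite ang_0. assert (0 < INR k) by (apply lt_0_INR; lia).
    replace (x + ang k (k - 1) + PI / INR k) with ((x + 0 - PI / INR k) + 2 * INR 1 * PI).
    apply cos_period. unfold ang. rewrite minus_INR by lia. simpl. field. lra. }
  rewrite E in T. apply (Rmult_eq_reg_l (2 * sin (PI / INR k))); [|lra]. rewrite T. ring.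
Qed.

Lemma sum_cos1 k x : (2 < k)%nat -> sum_n_m (fun j => cos (x + ang k j)) 1 k = 0.
Proof.
  intros Hk. assert (Hs := sinPIk k Hk).
  assert (T := tele_cos k x 1 (k - 1) ltac:(lia)). replace (1 + (k - 1))%nat with k in T by lia.
  assert (E : sin (x + ang k k + PI / INR k) = sin (x + ang k 1 - PI / INR k)).
  { assert (0 < INR k) by (apply lt_0_INR; lia).
    replace (x + ang k k + PI / INR k) with ((x + ang k 1 - PI / INR k) + 2 * INR 1 * PI).
    apply sin_period. unfold ang. simpl. field. lra. }
  rewrite E in T. apply (Rmult_eq_reg_l (2 * sin (PI / INR k))); [|lra]. rewrite T. ring.
Qed.

Lemma sum_sin1 k x : (2 < k)%nat -> sum_n_m (fun j => sin (x + ang k j)) 1 k = 0.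
Proof.
  intros Hk. assert (Hs := sinPIk k Hk).
  assert (T := tele_sin k x 1 (k - 1) ltac:(lia)). replace (1 + (k - 1))%nat with k in T by lia.
  assert (E : cos (x + ang k k + PI / INR k) = cos (x + ang k 1 - PI / INR k)).
  { assert (0 < INR k) by (apply lt_0_INR; lia).
    replace (x + ang k k + PI / INR k) with ((x + ang k 1 - PI / INR k) + 2 * INR 1 * PI).
    apply cos_period. unfold ang. simpl. field. lra. }
  rewrite E in T. apply (Rmult_eq_reg_l (2 * sin (PI / INR k))); [|lra]. rewrite T. ring.
Qed.

Lemma dX f f1 f2 s : Dv f f1 -> Dv f1 f2 ->
  is_derive (fun t : R => f t * cos t - f1 t * sin t) s (- (f s + f2 s) * sin s).
Proof.
  intros H1 H2. auto_derive.
  - repeat split; try (exists (f1 s); apply H1); try (exists (f2 s); apply H2).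
  - assert (E1 : Derive (fun y : R => f y) s = f1 s) by (apply is_derive_unique; apply H1).
    assert (E2 : Derive (fun y : R => f1 y) s = f2 s) by (apply is_derive_unique; apply H2).
    rewrite E1, E2. ring.
Qed.

Lemma dY f f1 f2 s : Dv f f1 -> Dv f1 f2 ->
  is_derive (fun t : R => f t * sin t + f1 t * cos t) s ((f s + f2 s) * cos s).
Proof.
  intros H1 H2. auto_derive.
  - repeat split; try (exists (f1 s); apply H1); try (exists (f2 s); apply H2).
  - assert (E1 : Derive (fun y : R => f y) s = f1 s) by (apply is_derive_unique; apply H1).
    assert (E2 : Derive (fun y : R => f1 y) s = f2 s) by (apply is_derive_unique; apply H2).
    rewrite E1, E2. ring.
Qed.

Lemma curve_area f f1 f2 : Dv f f1 -> Dv f1 f2 -> cont f2 -> per f ->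
  oriented_area (fun s => (f s * cos s - f1 s * sin s, f s * sin s + f1 s * cos s))
  = / 2 * (I (fun x => f x * f x) - I (fun x => f1 x * f1 x)).
Proof.
  intros H1 H2 C2 P.
  assert (C := D_cont _ _ H1). assert (C1 := D_cont _ _ H2). assert (P1 := per_D _ _ H1 P).
  unfold oriented_area. simpl. f_equal.
  change (RInt ?g 0 (2 * PI)) with (I g).
  rewrite (I_ext _ (fun x => f x * f x + f x * f2 x)).
  2: { intros x. rewrite (is_derive_unique _ _ _ (dX f f1 f2 x H1 H2)).
       rewrite (is_derive_unique _ _ _ (dY f f1 f2 x H1 H2)).
       assert (T := sin2_cos2 x). unfold Rsqr in T.
       transitivity ((f x * f x + f x * f2 x) * (sin x * sin x + cos x * cos x)). ring. rewrite T. ring. }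
  rewrite I_plus by (intro; ctac).
  rewrite (IBP f f1 f1 f2 H1 H2 C1 C2 P P1). lra.
Qed.

Lemma curve_length_eq f f1 f2 : Dv f f1 -> Dv f1 f2 -> cont f2 -> per f -> (forall s, f s + f2 s > 0) ->
  curve_length (fun s => (f s * cos s - f1 s * sin s, f s * sin s + f1 s * cos s)) = I f.
Proof.
  intros H1 H2 C2 P Pos.
  assert (C := D_cont _ _ H1). assert (C1 := D_cont _ _ H2). assert (P1 := per_D _ _ H1 P).
  unfold curve_length. simpl.
  change (RInt ?g 0 (2 * PI)) with (I g).
  rewrite (I_ext _ (fun x => f x + f2 x)).
  2: { intros x. rewrite (is_derive_unique _ _ _ (dX f f1 f2 x H1 H2)).
       rewrite (is_derive_unique _ _ _ (dY f f1 f2 x H1 H2)).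
       transitivity (sqrt ((f x + f2 x) ^ 2)).
       { apply f_equal. assert (T := sin2_cos2 x). unfold Rsqr in T. transitivity ((f x + f2 x)^2 * (sin x * sin x + cos x * cos x)). ring. rewrite T; ring. }
       apply sqrt_pow2. specialize (Pos x); lra. }
  rewrite I_plus by (intro; ctac).
  rewrite (I_D f1 f2 H2 C2 P1). ring.
Qed.

Lemma s2c2 x : sin x * sin x + cos x * cos x = 1.
Proof. assert (T := sin2_cos2 x). unfold Rsqr in T. exact T. Qed.

Lemma OPS_eq h k : OPS h k = fun s =>
  ((avgk k h s - / 2 * avg_width h) * cos s - avgk k (Derive h) s * sin s,
   (avgk k h s - / 2 * avg_width h) * sin s + avgk k (Derive h) s * cos s).
Proof.
  apply functional_extensionality. intros s. unfold OPS. simpl. f_equal.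
  - rewrite (sum_n_m_ext _ (fun j => cos s * h (s + ang k j) + (- sin s) * Derive h (s + ang k j))).
    + rewrite sumnm_plus, sumnm_mult_l, sumnm_mult_l. unfold avgk. ring.
    + intros j. unfold oval_pt, perp; simpl. set (b := ang k j).
      rewrite (cos_plus s b), (sin_plus s b).
      transitivity ((cos s * h (s + b) - sin s * Derive h (s + b)) * (sin b * sin b + cos b * cos b)). ring.
      rewrite s2c2. ring.
  - rewrite (sum_n_m_ext _ (fun j => sin s * h (s + ang k j) + cos s * Derive h (s + ang k j))).
    + rewrite sumnm_plus, sumnm_mult_l, sumnm_mult_l. unfold avgk. ring.
    + intros j. unfold oval_pt, perp; simpl. set (b := ang k j).
      rewrite (cos_plus s b), (sin_plus s b).
      transitivity ((sin s * h (s + b) + cos s * Derive h (s + b)) * (sin b * sin b + cos b * cos b)). ring.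
      rewrite s2c2. ring.
Qed.

Definition wx (a b P0 P1 : R) := (P0 * sin (b + a) - P1 * sin b) / sin a.
Definition wy (a b P0 P1 : R) := (P1 * cos b - P0 * cos (b + a)) / sin a.

Lemma sol_line1 a b P0 P1 : sin a <> 0 -> wx a b P0 P1 * cos b + wy a b P0 P1 * sin b = P0.
Proof.
  intros H. unfold wx, wy.
  assert (K : (P0 * sin (b + a) - P1 * sin b) * cos b + (P1 * cos b - P0 * cos (b + a)) * sin b = P0 * sin a).
  { rewrite sin_plus, cos_plus. transitivity (P0 * sin a * (sin b * sin b + cos b * cos b)). ring. rewrite s2c2. ring. }
  transitivity (((P0 * sin (b + a) - P1 * sin b) * cos b + (P1 * cos b - P0 * cos (b + a)) * sin b) / sin a).
  field; auto. rewrite K. field; auto.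
Qed.

Lemma sol_line2 a b P0 P1 : sin a <> 0 -> wx a b P0 P1 * cos (b + a) + wy a b P0 P1 * sin (b + a) = P1.
Proof.
  intros H. unfold wx, wy.
  assert (K : (P0 * sin (b + a) - P1 * sin b) * cos (b + a) + (P1 * cos b - P0 * cos (b + a)) * sin (b + a) = P1 * sin a).
  { rewrite sin_plus, cos_plus. transitivity (P1 * sin a * (sin b * sin b + cos b * cos b)). ring. rewrite s2c2. ring. }
  transitivity (((P0 * sin (b + a) - P1 * sin b) * cos (b + a) + (P1 * cos b - P0 * cos (b + a)) * sin (b + a)) / sin a).
  field; auto. rewrite K. field; auto.
Qed.

Lemma uniq2 a b x1 x2 y1 y2 : sin a <> 0 ->
  x1 * cos b + x2 * sin b = y1 * cos b + y2 * sin b ->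
  x1 * cos (b + a) + x2 * sin (b + a) = y1 * cos (b + a) + y2 * sin (b + a) -> x1 = y1 /\ x2 = y2.
Proof.
  intros H E1 E2. rewrite cos_plus, sin_plus in E2.
  set (d1 := x1 - y1). set (d2 := x2 - y2).
  assert (F1 : d1 * cos b + d2 * sin b = 0) by (unfold d1, d2; lra).
  assert (F2 : sin a * (d2 * cos b - d1 * sin b) = 0).
  { unfold d1, d2. transitivity ((x1 * (cos b * cos a - sin b * sin a) + x2 * (sin b * cos a + cos b * sin a))
      - (y1 * (cos b * cos a - sin b * sin a) + y2 * (sin b * cos a + cos b * sin a)) - cos a * (d1 * cos b + d2 * sin b)).
    unfold d1, d2; ring. rewrite E2, F1. ring. }
  assert (F3 : d2 * cos b - d1 * sin b = 0).
  { apply Rmult_integral in F2. destruct F2; [contradiction|auto]. }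
  assert (G1 : d1 = 0).
  { transitivity (d1 * (sin b * sin b + cos b * cos b)). rewrite s2c2; ring.
    transitivity (cos b * (d1 * cos b + d2 * sin b) - sin b * (d2 * cos b - d1 * sin b)). ring.
    rewrite F1, F3. ring. }
  assert (G2 : d2 = 0).
  { transitivity (d2 * (sin b * sin b + cos b * cos b)). rewrite s2c2; ring.
    transitivity (sin b * (d1 * cos b + d2 * sin b) + cos b * (d2 * cos b - d1 * sin b)). ring.
    rewrite F1, F3. ring. }
  unfold d1, d2 in *. lra.
Qed.

Lemma diff_w a g P0 P1 P2 : sin a <> 0 ->
  wx a g P1 P2 - wx a (g - a) P0 P1 = - ((P0 + P2 - 2 * cos a * P1) / sin a) * sin g /\
  wy a g P1 P2 - wy a (g - a) P0 P1 = ((P0 + P2 - 2 * cos a * P1) / sin a) * cos g.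
Proof.
  intros H. unfold wx, wy. replace (g - a + a) with g by ring.
  rewrite (sin_plus g a), (cos_plus g a), (sin_minus g a), (cos_minus g a).
  split; field; auto.
Qed.

Lemma dist2_t lam g : dist2 (lam * - sin g, lam * cos g) (0, 0) = Rabs lam.
Proof.
  unfold dist2; simpl. rewrite <- sqrt_Rsqr_abs. f_equal. unfold Rsqr.
  transitivity (lam * lam * (sin g * sin g + cos g * cos g)). ring. rewrite s2c2; ring.
Qed.

Lemma pos_sec h h1 h2 sg t : Dv h h1 -> Dv h1 h2 -> (forall x, h x + h2 x > 0) -> 0 < t < PI ->
  h (sg + t) + h (sg - t) - 2 * cos t * h sg > 0.
Proof.
  intros D1 D2 Pos Ht.
  assert (E1 : forall y, Derive (fun x : R => h x) y = h1 y) by (intros; apply is_derive_unique; apply D1).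
  assert (E2 : forall y, Derive (fun x : R => h1 x) y = h2 y) by (intros; apply is_derive_unique; apply D2).
  set (f := fun tau => h (sg + tau) + h (sg - tau) - 2 * cos tau * h sg).
  set (f1 := fun tau => h1 (sg + tau) - h1 (sg - tau) + 2 * sin tau * h sg).
  set (H := fun tau => f1 tau * sin (t - tau) + f tau * cos (t - tau)).
  set (H' := fun tau => (h (sg + tau) + h2 (sg + tau) + (h (sg - tau) + h2 (sg - tau))) * sin (t - tau)).
  assert (DH : forall c, 0 <= c <= t -> derivable_pt_lim H c (H' c)).
  { intros c _. apply is_derive_Reals. unfold H, H', f, f1. auto_derive.
    - repeat split; try (eexists; apply D1); try (eexists; apply D2).
    - rewrite !E1, !E2. match goal with |- ?a = ?b => change (@eq R a b) end. unfold Rminus. ring. }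
  destruct (MVT_cor2 H H' 0 t ltac:(lra) DH) as [c [Hc Hc2]].
  assert (Ht0 : H t = f t) by (unfold H; rewrite Rminus_diag, sin_0, cos_0; ring).
  assert (H00 : H 0 = 0).
  { unfold H, f, f1. rewrite sin_0, cos_0, Rplus_0_r, Rminus_0_r. ring. }
  rewrite Ht0, H00 in Hc.
  assert (P1 := Pos (sg + c)). assert (P2 := Pos (sg - c)).
  assert (S : 0 < sin (t - c)) by (apply sin_gt_0; lra).
  assert (0 < H' c) by (unfold H'; apply Rmult_lt_0_compat; lra).
  unfold f in Hc. nra.
Qed.

Lemma e_bounds k : (2 < k)%nat -> 0 < PI / INR k < PI / 2.
Proof.
  intros Hk. assert (2 < INR k) by (replace 2 with (INR 2) by (simpl; ring); apply lt_INR; lia).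
  assert (Hpi := PI_RGT_0). split. apply Rdiv_lt_0_compat; lra.
  apply (Rmult_lt_reg_r (INR k)); [lra|]. field_simplify; [nra | lra].
Qed.

Lemma angS k j : (0 < k)%nat -> ang k (S j) = ang k j + 2 * (PI / INR k).
Proof. intros. unfold ang. rewrite S_INR. assert (0 < INR k) by (apply lt_0_INR; lia). field. lra. Qed.

Lemma ang_mod k m : (0 < k)%nat -> ang k m = ang k (m mod k) + 2 * INR (m / k) * PI.
Proof.
  intros Hk. assert (0 < INR k) by (apply lt_0_INR; lia).
  assert (E := Nat.div_mod_eq m k).
  unfold ang. rewrite E at 1. rewrite plus_INR, mult_INR. field. lra.
Qed.

Lemma ang_pred k i : (0 < k)%nat -> ang k (i + k - 1) = ang k i - 2 * (PI / INR k) + 2 * INR 1 * PI.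
Proof.
  intros Hk. assert (0 < INR k) by (apply lt_0_INR; lia).
  unfold ang. rewrite minus_INR by lia. rewrite plus_INR. simpl. field. lra.
Qed.

Lemma sideval g a R0 A B :
  (A + R0 * cos (g + a) - (A + R0 * cos g)) ^ 2 + (B + R0 * sin (g + a) - (B + R0 * sin g)) ^ 2
  = R0 * R0 * ((cos a - 1) ^ 2 + sin a ^ 2).
Proof.
  rewrite cos_plus, sin_plus.
  transitivity (R0 * R0 * ((cos a - 1) ^ 2 + sin a ^ 2) * (sin g * sin g + cos g * cos g)). ring.
  rewrite s2c2; ring.
Qed.

Lemma sideval' g a R0 A B :
  (A + R0 * cos (g - a) - (A + R0 * cos g)) ^ 2 + (B + R0 * sin (g - a) - (B + R0 * sin g)) ^ 2
  = R0 * R0 * ((cos a - 1) ^ 2 + sin a ^ 2).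
Proof.
  rewrite cos_minus, sin_minus.
  transitivity (R0 * R0 * ((cos a - 1) ^ 2 + sin a ^ 2) * (sin g * sin g + cos g * cos g)). ring.
  rewrite s2c2; ring.
Qed.

Lemma dotval g a R0 A B :
  (A + R0 * cos (g - a) - (A + R0 * cos g)) * (A + R0 * cos (g + a) - (A + R0 * cos g)) +
  (B + R0 * sin (g - a) - (B + R0 * sin g)) * (B + R0 * sin (g + a) - (B + R0 * sin g))
  = R0 * R0 * ((cos a - 1) ^ 2 - sin a ^ 2).
Proof.
  rewrite cos_minus, sin_minus, cos_plus, sin_plus.
  transitivity (R0 * R0 * ((cos a - 1) ^ 2 - sin a ^ 2) * (sin g * sin g + cos g * cos g)). ring.
  rewrite s2c2; ring.
Qed.

Lemma fwd_poly (h G : R -> R) k A B :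
  (2 < k)%nat -> (forall x, h x = G x + A * cos x + B * sin x) -> (forall s j, G (s + ang k j) = G s) ->
  forall s v, (forall j, (j < k)%nat -> on_support_line h k s j (v j) /\ on_support_line h k s (S j) (v j)) ->
  regular_polygon k v /\ center_of_mass k v = (A, B).
Proof.
  intros Hk Hh HG s v Hv.
  assert (Hk0 : (0 < k)%nat) by lia.
  assert (HkR : 0 < INR k) by (apply lt_0_INR; lia).
  set (e := PI / INR k).
  assert (He := e_bounds k Hk). fold e in He.
  assert (Hce : 0 < cos e) by (apply cos_gt_0; lra).
  assert (Hs2e : sin (2 * e) <> 0) by (apply Rgt_not_eq; apply sin_gt_0; lra).
  set (rho := G s). set (R0 := rho / cos e).
  set (V := fun j : nat => (A + R0 * cos (s + e + ang k j), B + R0 * sin (s + e + ang k j))).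
  assert (HV : forall j, (j < k)%nat -> v j = V j).
  { intros j Hj. destruct (Hv j Hj) as [L1 L2]. unfold on_support_line in L1, L2.
    rewrite angS in L2 by auto. fold e in L2.
    set (b := s + ang k j) in *.
    replace (s + (ang k j + 2 * e)) with (b + 2 * e) in L2 by (unfold b; ring).
    destruct (uniq2 (2 * e) b (fst (v j)) (snd (v j)) (fst (V j)) (snd (V j)) Hs2e).
    - rewrite L1. unfold V; cbn [fst snd]. rewrite Hh. unfold b at 1. rewrite HG. fold rho.
      assert (C : cos (s + e + ang k j) * cos b + sin (s + e + ang k j) * sin b = cos e).
      { rewrite <- cos_minus. f_equal. unfold b; ring. }
      transitivity (A * cos b + B * sin b + R0 * (cos (s + e + ang k j) * cos b + sin (s + e + ang k j) * sin b)).
      2: ring. rewrite C. unfold R0. field. lra.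
    - rewrite L2. unfold V; cbn [fst snd]. rewrite Hh.
      replace (b + 2 * e) with (s + ang k (S j)) by (unfold b; rewrite angS by auto; fold e; ring).
      rewrite HG. fold rho. replace (s + ang k (S j)) with (b + 2 * e) by (unfold b; rewrite angS by auto; fold e; ring).
      assert (C : cos (s + e + ang k j) * cos (b + 2 * e) + sin (s + e + ang k j) * sin (b + 2 * e) = cos e).
      { rewrite <- cos_minus. replace (s + e + ang k j - (b + 2 * e)) with (- e) by (unfold b; ring). apply cos_neg. }
      transitivity (A * cos (b + 2 * e) + B * sin (b + 2 * e) + R0 * (cos (s + e + ang k j) * cos (b + 2 * e) + sin (s + e + ang k j) * sin (b + 2 * e))).
      2: ring. rewrite C. unfold R0. field. lra.
    - destruct (v j) as [x1 x2]. destruct (V j) as [y1 y2]. simpl in *. subst. auto. }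
  assert (Vmod : forall m, V (m mod k) = V m).
  { intros m. unfold V. rewrite (ang_mod k m) by auto.
    replace (s + e + (ang k (m mod k) + 2 * INR (m / k) * PI)) with (s + e + ang k (m mod k) + 2 * INR (m / k) * PI) by ring.
    rewrite cos_period, sin_period. auto. }
  assert (Hmod : forall m, (m mod k < k)%nat) by (intros; apply Nat.mod_upper_bound; lia).
  set (a2 := 2 * e).
  assert (Side : forall i, (i < k)%nat -> side_len k v i = sqrt (R0 * R0 * ((cos a2 - 1) ^ 2 + sin a2 ^ 2))).
  { intros i Hi. unfold side_len, dist2. rewrite (HV _ (Hmod _)), (HV i Hi), Vmod.
    unfold V; cbn [fst snd]. rewrite Nat.add_1_r, angS by auto. fold e. fold a2.
    replace (s + e + (ang k i + a2)) with (s + e + ang k i + a2) by ring.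
    rewrite sideval. auto. }
  assert (Ang : forall i, (i < k)%nat -> vertex_angle k v i =
     acos (R0 * R0 * ((cos a2 - 1) ^ 2 - sin a2 ^ 2) /
           (sqrt (R0 * R0 * ((cos a2 - 1) ^ 2 + sin a2 ^ 2)) * sqrt (R0 * R0 * ((cos a2 - 1) ^ 2 + sin a2 ^ 2))))).
  { intros i Hi. unfold vertex_angle. rewrite (HV _ (Hmod (i + k - 1)%nat)), (HV _ (Hmod (i + 1)%nat)), (HV i Hi), !Vmod.
    unfold V; cbn [fst snd]. rewrite Nat.add_1_r, angS by auto. fold e. fold a2.
    rewrite ang_pred by auto. fold e. fold a2.
    set (g := s + e + ang k i).
    replace (s + e + (ang k i - a2 + 2 * INR 1 * PI)) with ((g - a2) + 2 * INR 1 * PI) by (unfold g; ring).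
    rewrite cos_period, sin_period.
    replace (s + e + (ang k i + a2)) with (g + a2) by (unfold g; ring).
    rewrite dotval, sideval, sideval'. auto. }
  split.
  - intros i j Hi Hj. rewrite (Side i Hi), (Side j Hj), (Ang i Hi), (Ang j Hj). auto.
  - unfold center_of_mass.
    rewrite (sum_n_m_ext_loc _ (fun j => A + R0 * cos (s + e + ang k j))).
    2: { intros j Hj. rewrite HV by lia. reflexivity. }
    rewrite (sum_n_m_ext_loc (fun j => snd (v j)) (fun j => B + R0 * sin (s + e + ang k j))).
    2: { intros j Hj. rewrite HV by lia. reflexivity. }
    rewrite !sumnm_plus, !sum_n_m_const, !sumnm_mult_l, sum_cos0, sum_sin0 by auto.
    replace (S (k - 1) - 0)%nat with k by lia.
    f_equal; field; lra.
Qed.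

Lemma dist2_diff (P Q : R * R) : dist2 P Q = dist2 (fst P - fst Q, snd P - snd Q) (0, 0).
Proof. unfold dist2; simpl. f_equal. ring. Qed.

Lemma bwd_poly h h1 h2 k c1 c2 : (2 < k)%nat -> Dv h h1 -> Dv h1 h2 -> (forall x, h x + h2 x > 0) ->
  (forall s v, (forall j, (j < k)%nat -> on_support_line h k s j (v j) /\ on_support_line h k s (S j) (v j)) ->
     regular_polygon k v /\ center_of_mass k v = (c1, c2)) ->
  forall s, h (s + ang k 1) - c1 * cos (s + ang k 1) - c2 * sin (s + ang k 1) = h s - c1 * cos s - c2 * sin s.
Proof.
  intros Hk D1 D2 Pos Hpoly s.
  assert (Hk0 : (0 < k)%nat) by lia.
  assert (HkR : 0 < INR k) by (apply lt_0_INR; lia).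
  set (e := PI / INR k).
  assert (He := e_bounds k Hk). fold e in He.
  assert (Hpi := PI_RGT_0).
  assert (Hse : 0 < sin e) by (apply sin_gt_0; lra).
  set (a2 := 2 * e).
  assert (Ha1 : ang k 1 = a2) by (unfold a2, e; rewrite angS, ang_0 by auto; ring).
  assert (HaS : forall j, ang k (S j) = ang k j + a2) by (intros; unfold a2, e; apply angS; auto).
  assert (Hsa : 0 < sin a2) by (apply sin_gt_0; unfold a2; lra).
  assert (Hsa0 : sin a2 <> 0) by lra.
  set (bt := fun j => s + ang k j).
  assert (HbS : forall j, bt (S j) = bt j + a2) by (intros; unfold bt; rewrite HaS; ring).
  set (p := fun j => h (bt j) - c1 * cos (bt j) - c2 * sin (bt j)).
  set (w1 := fun j => wx a2 (bt j) (p j) (p (S j))).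
  set (w2 := fun j => wy a2 (bt j) (p j) (p (S j))).
  set (v := fun j => (c1 + w1 j, c2 + w2 j)).
  assert (Lines : forall j, (j < k)%nat -> on_support_line h k s j (v j) /\ on_support_line h k s (S j) (v j)).
  { intros j _. unfold on_support_line, v; cbn [fst snd]. fold (bt j) (bt (S j)). split.
    - assert (E := sol_line1 a2 (bt j) (p j) (p (S j)) Hsa0). unfold w1, w2.
      transitivity (c1 * cos (bt j) + c2 * sin (bt j) + (wx a2 (bt j) (p j) (p (S j)) * cos (bt j) + wy a2 (bt j) (p j) (p (S j)) * sin (bt j))). ring.
      rewrite E. unfold p. ring.
    - assert (E := sol_line2 a2 (bt j) (p j) (p (S j)) Hsa0). unfold w1, w2. rewrite HbS.
      transitivity (c1 * cos (bt j + a2) + c2 * sin (bt j + a2) + (wx a2 (bt j) (p j) (p (S j)) * cos (bt j + a2) + wy a2 (bt j) (p j) (p (S j)) * sin (bt j + a2))). ring.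
      rewrite E. unfold p. rewrite HbS. ring. }
  destruct (Hpoly s v Lines) as [Hreg Hcen].
  set (lam := fun i => (p i + p (S (S i)) - 2 * cos a2 * p (S i)) / sin a2).
  assert (Diff : forall i, w1 (S i) - w1 i = - lam i * sin (bt (S i)) /\ w2 (S i) - w2 i = lam i * cos (bt (S i))).
  { intros i. unfold w1, w2, lam.
    replace (bt i) with (bt (S i) - a2) by (rewrite HbS; ring).
    apply diff_w; auto. }
  assert (Side : forall i, (S i < k)%nat -> side_len k v i = Rabs (lam i)).
  { intros i Hi. unfold side_len. rewrite Nat.mod_small by lia. rewrite Nat.add_1_r.
    rewrite dist2_diff. unfold v; cbn [fst snd].
    replace (c1 + w1 (S i) - (c1 + w1 i)) with (w1 (S i) - w1 i) by ring.
    replace (c2 + w2 (S i) - (c2 + w2 i)) with (w2 (S i) - w2 i) by ring.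
    destruct (Diff i) as [E1 E2]. rewrite E1, E2.
    replace (- lam i * sin (bt (S i))) with (lam i * - sin (bt (S i))) by ring.
    apply dist2_t. }
  assert (LamPos : forall i, 0 < lam i).
  { intros i. unfold lam. apply Rdiv_lt_0_compat; [|auto].
    assert (Q := pos_sec h h1 h2 (bt (S i)) a2 D1 D2 Pos ltac:(unfold a2; lra)).
    assert (N : p i + p (S (S i)) - 2 * cos a2 * p (S i) = h (bt (S i) + a2) + h (bt (S i) - a2) - 2 * cos a2 * h (bt (S i))).
    { unfold p; cbv beta. rewrite (HbS (S i)).
      replace (bt i) with (bt (S i) - a2) by (rewrite HbS; ring).
      set (g := bt (S i)).
      rewrite (cos_plus g a2), (sin_plus g a2), (cos_minus g a2), (sin_minus g a2). ring. }
    rewrite N. lra. }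
  set (L := lam 0%nat).
  assert (LamEq : forall i, (S i < k)%nat -> lam i = L).
  { intros i Hi. destruct (Hreg i 0%nat ltac:(lia) ltac:(lia)) as [S1 _].
    rewrite (Side i Hi), (Side 0%nat ltac:(lia)) in S1.
    rewrite !Rabs_pos_eq in S1 by (apply Rlt_le; apply LamPos). exact S1. }
  set (z1 := fun j => L / (2 * sin e) * cos (s + e + ang k j)).
  set (z2 := fun j => L / (2 * sin e) * sin (s + e + ang k j)).
  set (d1 := w1 0%nat - z1 0%nat). set (d2 := w2 0%nat - z2 0%nat).
  assert (Zdiff : forall j, z1 (S j) - z1 j = - L * sin (bt (S j)) /\ z2 (S j) - z2 j = L * cos (bt (S j))).
  { intros j. unfold z1, z2. rewrite HaS. unfold bt. rewrite HaS.
    set (g := s + ang k j + a2).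
    replace (s + e + (ang k j + a2)) with (g + e) by (unfold g, a2; ring).
    replace (s + e + ang k j) with (g - e) by (unfold g, a2; ring).
    replace (s + (ang k j + a2)) with g by (unfold g; ring).
    rewrite (cos_plus g e), (sin_plus g e), (cos_minus g e), (sin_minus g e).
    split; field; lra. }
  assert (Wz : forall j, (j <= k - 1)%nat -> w1 j = z1 j + d1 /\ w2 j = z2 j + d2).
  { induction j; intros Hj.
    - unfold d1, d2; split; ring.
    - destruct (IHj ltac:(lia)) as [I1 I2]. destruct (Diff j) as [E1 E2]. destruct (Zdiff j) as [F1 F2].
      rewrite (LamEq j ltac:(lia)) in E1, E2. split; lra. }
  assert (Cen1 : / INR k * sum_n_m (fun j => fst (v j)) 0 (k - 1) = c1) by (apply (f_equal fst Hcen)).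
  assert (Cen2 : / INR k * sum_n_m (fun j => snd (v j)) 0 (k - 1) = c2) by (apply (f_equal snd Hcen)).
  assert (Hsum : forall (f : nat -> R) c d, (forall j, (j <= k - 1)%nat -> f j = c + d * cos (s + e + ang k j)) ->
            sum_n_m f 0 (k - 1) = INR k * c).
  { intros f c d Hf. rewrite (sum_n_m_ext_loc _ (fun j => c + d * cos (s + e + ang k j))) by (intros; apply Hf; lia).
    rewrite sumnm_plus, sum_n_m_const, sumnm_mult_l, sum_cos0 by auto.
    replace (S (k - 1) - 0)%nat with k by lia. match goal with |- ?a = ?b => change (@eq R a b) end. ring. }
  assert (Hsum2 : forall (f : nat -> R) c d, (forall j, (j <= k - 1)%nat -> f j = c + d * sin (s + e + ang k j)) ->
            sum_n_m f 0 (k - 1) = INR k * c).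
  { intros f c d Hf. rewrite (sum_n_m_ext_loc _ (fun j => c + d * sin (s + e + ang k j))) by (intros; apply Hf; lia).
    rewrite sumnm_plus, sum_n_m_const, sumnm_mult_l, sum_sin0 by auto.
    replace (S (k - 1) - 0)%nat with k by lia. match goal with |- ?a = ?b => change (@eq R a b) end. ring. }
  rewrite (Hsum _ (c1 + d1) (L / (2 * sin e))) in Cen1.
  2: { intros j Hj. unfold v; cbn [fst snd]. destruct (Wz j Hj) as [W _]. rewrite W. unfold z1. ring. }
  rewrite (Hsum2 _ (c2 + d2) (L / (2 * sin e))) in Cen2.
  2: { intros j Hj. unfold v; cbn [fst snd]. destruct (Wz j Hj) as [_ W]. rewrite W. unfold z2. ring. }
  assert (D10 : d1 = 0).
  { assert (/ INR k * (INR k * (c1 + d1)) = c1 + d1) by (field; lra). lra. }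
  assert (D20 : d2 = 0).
  { assert (/ INR k * (INR k * (c2 + d2)) = c2 + d2) by (field; lra). lra. }
  destruct (Wz 0%nat ltac:(lia)) as [W10 W20].
  destruct (Wz 1%nat ltac:(lia)) as [W11 W21].
  assert (P0 := sol_line1 a2 (bt 0%nat) (p 0%nat) (p 1%nat) Hsa0).
  assert (P1 := sol_line1 a2 (bt 1%nat) (p 1%nat) (p 2%nat) Hsa0).
  fold (w1 0%nat) (w2 0%nat) in P0. fold (w1 1%nat) (w2 1%nat) in P1.
  rewrite W10, W20, D10, D20 in P0. rewrite W11, W21, D10, D20 in P1.
  unfold z1, z2 in P0, P1.
  assert (Q0 : p 0%nat = L / (2 * sin e) * cos e).
  { rewrite <- P0. unfold bt. rewrite ang_0. rewrite !Rplus_0_r.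
    replace (cos e) with (cos ((s + e) - s)) by (f_equal; ring).
    rewrite (cos_minus (s + e) s). ring. }
  assert (Q1 : p 1%nat = L / (2 * sin e) * cos e).
  { rewrite <- P1. unfold bt.
    replace (cos e) with (cos ((s + e + ang k 1) - (s + ang k 1))) by (f_equal; ring).
    rewrite (cos_minus (s + e + ang k 1) (s + ang k 1)). ring. }
  assert (E : p 1%nat = p 0%nat) by (rewrite Q0, Q1; auto).
  unfold p, bt in E. rewrite ang_0, Rplus_0_r in E. exact E.
Qed.

Ltac Rring := match goal with |- ?a = ?b => change (@eq R a b) end; ring.

Lemma Dv_minus f f' g g' : Dv f f' -> Dv g g' -> Dv (fun x => f x - g x) (fun x => f' x - g' x).
Proof.
  intros Hf Hg x. apply (@is_derive_minus R_AbsRing R_NormedModule f g x (f' x) (g' x) (Hf x) (Hg x)).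
Qed.

Lemma Dv_sin : Dv sin cos.
Proof. intros x. auto_derive; auto. ring. Qed.
Lemma Dv_cos : Dv cos (fun x => - sin x).
Proof. intros x. auto_derive; auto. ring. Qed.

Lemma I_by_anti F f : Dv F f -> cont f -> I f = F (2 * PI) - F 0.
Proof.
  intros H C. unfold I. rewrite (is_RInt_unique f 0 (2*PI) (minus (F (2*PI)) (F 0))).
  - unfold minus, plus, opp; simpl. ring.
  - apply (@is_RInt_derive R_CompleteNormedModule); intros; auto.
Qed.

Lemma I_cc : I (fun x => cos x * cos x) = PI.
Proof.
  rewrite (I_by_anti (fun x => (x + sin x * cos x) / 2)).
  - rewrite sin_2PI, cos_2PI, sin_0, cos_0. field.
  - intros x. auto_derive; auto. assert (T := s2c2 x). nra.
  - intro; ctac.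
Qed.

Lemma I_ss : I (fun x => sin x * sin x) = PI.
Proof.
  rewrite (I_by_anti (fun x => (x - sin x * cos x) / 2)).
  - rewrite sin_2PI, cos_2PI, sin_0, cos_0. field.
  - intros x. auto_derive; auto. assert (T := s2c2 x). nra.
  - intro; ctac.
Qed.

Lemma I_sc : I (fun x => sin x * cos x) = 0.
Proof.
  rewrite (I_by_anti (fun x => sin x * sin x / 2)).
  - rewrite sin_2PI, sin_0. field.
  - intros x. auto_derive; auto. field.
  - intro; ctac.
Qed.

Lemma per_cos : per cos.
Proof. intro x. rewrite cos_plus, cos_2PI, sin_2PI. ring. Qed.
Lemma per_sin : per sin.
Proof. intro x. rewrite sin_plus, cos_2PI, sin_2PI. ring. Qed.

Lemma Gcs_zero G a : cont G -> per G -> (forall x, G (x + a) = G x) -> sin a > 0 ->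
  I (fun x => G x * cos x) = 0 /\ I (fun x => G x * sin x) = 0.
Proof.
  intros C P S Hs.
  set (X := I (fun x => G x * cos x)). set (Y := I (fun x => G x * sin x)).
  assert (Cp : cont (fun x => G x * cos x)) by (intro; ctac).
  assert (Pp : per (fun x => G x * cos x)) by (intro; rewrite P, per_cos; auto).
  assert (Cq : cont (fun x => G x * sin x)) by (intro; ctac).
  assert (Pq : per (fun x => G x * sin x)) by (intro; rewrite P, per_sin; auto).
  assert (E1 : X = cos a * X + (- sin a) * Y).
  { unfold X at 1. rewrite <- (I_shift _ a Cp Pp).
    rewrite (I_ext _ (fun x => cos a * (G x * cos x) + (- sin a) * (G x * sin x))).
    2: { intros x. rewrite S, cos_plus. ring. }
    rewrite I_plus, I_scal, I_scal by (intro; ctac). auto. }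
  assert (E2 : Y = sin a * X + cos a * Y).
  { unfold Y at 1. rewrite <- (I_shift _ a Cq Pq).
    rewrite (I_ext _ (fun x => sin a * (G x * cos x) + cos a * (G x * sin x))).
    2: { intros x. rewrite S, sin_plus. ring. }
    rewrite I_plus, I_scal, I_scal by (intro; ctac). auto. }
  assert (T := s2c2 a).
  assert (X = 0 /\ Y = 0).
  { assert (F1 : (1 - cos a) * X + sin a * Y = 0) by lra.
    assert (F2 : - sin a * X + (1 - cos a) * Y = 0) by lra.
    assert (G1 : ((1 - cos a) * (1 - cos a) + sin a * sin a) * X = 0).
    { transitivity ((1 - cos a) * ((1 - cos a) * X + sin a * Y) - sin a * (- sin a * X + (1 - cos a) * Y)). ring.
      rewrite F1, F2. ring. }
    assert (G2 : ((1 - cos a) * (1 - cos a) + sin a * sin a) * Y = 0).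
    { transitivity (sin a * ((1 - cos a) * X + sin a * Y) + (1 - cos a) * (- sin a * X + (1 - cos a) * Y)). ring.
      rewrite F1, F2. ring. }
    assert (Pz : 0 < (1 - cos a) * (1 - cos a) + sin a * sin a) by nra.
    split; [apply (Rmult_eq_reg_l _ _ _ (eq_trans G1 (eq_sym (Rmult_0_r _)))) | apply (Rmult_eq_reg_l _ _ _ (eq_trans G2 (eq_sym (Rmult_0_r _))))]; lra. }
  auto.
Qed.

Lemma avg_lin k (F : R -> R) c1 c2 : (2 < k)%nat -> (forall x, F (x + ang k 1) = F x) ->
  forall x, avgk k (fun y => F y + c1 * cos y + c2 * sin y) x = F x.
Proof.
  intros Hk HF x.
  assert (HFj : forall j y, F (y + ang k j) = F y).
  { induction j; intros y. rewrite ang_0, Rplus_0_r; auto.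
    rewrite ang_S by lia. replace (y + (ang k j + ang k 1)) with (y + ang k j + ang k 1) by ring.
    rewrite HF. auto. }
  unfold avgk.
  rewrite (sum_n_m_ext _ (fun j => F x + (c1 * cos (x + ang k j) + c2 * sin (x + ang k j)))).
  2: { intros j. rewrite HFj. Rring. }
  rewrite sumnm_plus, sumnm_plus, sumnm_mult_l, sumnm_mult_l, sum_cos1, sum_sin1, sum_n_m_const by auto.
  replace (S k - 1)%nat with k by lia.
  assert (0 < INR k) by (apply lt_0_INR; lia).
  match goal with |- ?a = ?b => change (@eq R a b) end. field. lra.
Qed.

Theorem theorem5p1 (k : nat) (h : R -> R) :
  (2 < k)%nat -> oval_support h ->
  oval_length h ^ 2 - 4 * PI * oval_area h >= 4 * PI * Rabs (OPS_area h k) /\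
  (oval_length h ^ 2 - 4 * PI * oval_area h = 4 * PI * Rabs (OPS_area h k) <->
   forall (s : R) (v : nat -> R * R),
     (forall j : nat, (j < k)%nat ->
        on_support_line h k s j (v j) /\ on_support_line h k s (S j) (v j)) ->
     regular_polygon k v /\ center_of_mass k v = steiner_point h).
Proof.
  intros Hk [Hsm [Hper Hpos]].
  assert (Hk0 : (0 < k)%nat) by lia.
  assert (Hpi := PI_RGT_0).
  assert (D0 : Dv h (Derive h)) by exact (sm_D h 0 Hsm).
  assert (D1 : Dv (Derive h) (Derive_n h 2)) by exact (sm_D h 1 Hsm).
  assert (D2 : Dv (Derive_n h 2) (Derive_n h 3)) by exact (sm_D h 2 Hsm).
  assert (D3 : Dv (Derive_n h 3) (Derive_n h 4)) by exact (sm_D h 3 Hsm).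
  assert (C0 := D_cont _ _ D0). assert (C1 := D_cont _ _ D1).
  assert (C2 := D_cont _ _ D2). assert (C3 := D_cont _ _ D3).
  assert (P1 := per_D _ _ D0 Hper). assert (P2 := per_D _ _ D1 P1).
  assert (HL : oval_length h = I h).
  { unfold oval_length, oval_pt. apply (curve_length_eq h (Derive h) (Derive_n h 2)); auto. }
  assert (HA : oval_area h = / 2 * (I (fun x => h x * h x) - I (fun x => Derive h x * Derive h x))).
  { unfold oval_area, oval_pt. apply (curve_area h (Derive h) (Derive_n h 2)); auto. }
  set (a0 := / 2 * avg_width h).
  assert (Ha0 : 2 * PI * a0 = I h).
  { unfold a0, avg_width. change (RInt h 0 (2 * PI)) with (I h). field. lra. }
  set (G0 := avgk k h). set (G1 := avgk k (Derive h)). set (G2 := avgk k (Derive_n h 2)).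
  set (G3 := avgk k (Derive_n h 3)).
  assert (DG0 : Dv G0 G1) by (apply avg_Dv; auto).
  assert (DG1 : Dv G1 G2) by (apply avg_Dv; auto).
  assert (DG2 : Dv G2 G3) by (apply avg_Dv; auto).
  assert (CG0 := avg_cont k h C0). assert (CG1 := avg_cont k _ C1).
  assert (CG2 := avg_cont k _ C2). assert (CG3 := avg_cont k _ C3).
  assert (PG0 := avg_per k h Hper). assert (PG1 := avg_per k _ P1). assert (PG2 := avg_per k _ P2).
  set (psi := fun x => G0 x - a0).
  assert (Dpsi : Dv psi G1) by (apply Dv_minus_const; auto).
  assert (Ppsi : per psi) by (intro; unfold psi; rewrite PG0; auto).
  assert (Cpsi : cont psi) by (intro; unfold psi; ctac).
  assert (HAP : OPS_area h k = / 2 * (I (fun x => psi x * psi x) - I (fun x => G1 x * G1 x))).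
  { unfold OPS_area. rewrite OPS_eq. apply (curve_area psi G1 G2); auto. }
  assert (IG0 : I G0 = I h) by (apply avg_I; auto).
  assert (Ih1 : I (Derive h) = 0) by (apply (I_D h); auto).
  assert (IG1 : I G1 = 0) by (unfold G1; rewrite avg_I; auto).
  assert (Ipsi : I psi = 0).
  { unfold psi. rewrite I_minus by (auto; intro; ctac). rewrite I_const, IG0. lra. }
  set (r0 := fun x => h x - G0 x). set (r1 := fun x => Derive h x - G1 x).
  set (r2 := fun x => Derive_n h 2 x - G2 x). set (r3 := fun x => Derive_n h 3 x - G3 x).
  assert (Dr0 : Dv r0 r1) by (apply Dv_minus; auto).
  assert (Dr1 : Dv r1 r2) by (apply Dv_minus; auto).
  assert (Dr2 : Dv r2 r3) by (apply Dv_minus; auto).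
  assert (Cr0 : cont r0) by (intro; unfold r0; ctac).
  assert (Cr1 : cont r1) by (intro; unfold r1; ctac).
  assert (Cr3 : cont r3) by (intro; unfold r3; ctac).
  assert (Pr0 : per r0) by (intro; unfold r0; rewrite Hper, PG0; auto).
  assert (Ir0 : I r0 = 0) by (unfold r0; rewrite I_minus by auto; lra).
  assert (orth0 : I (fun x => G0 x * (h x - G0 x)) = 0) by (apply avg_orth; auto).
  assert (orth1 : I (fun x => G1 x * (Derive h x - G1 x)) = 0) by (apply avg_orth; auto).
  assert (W1 := wirtinger psi G1 Dpsi CG1 Ppsi Ipsi).
  assert (W2 := wirtinger r0 r1 Dr0 Cr1 Pr0 Ir0).
  assert (Ehh : I (fun x => h x * h x) = I (fun x => psi x * psi x) + I (fun x => r0 x * r0 x) + 2 * PI * (a0 * a0)).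
  { rewrite (I_ext _ (fun x => psi x * psi x + r0 x * r0 x + 2 * (G0 x * (h x - G0 x)) + (2 * a0) * psi x + a0 * a0)).
    2: { intros x. unfold psi, r0. ring. }
    rewrite I_plus, I_plus, I_plus, I_plus, I_scal, I_scal, I_const, orth0, Ipsi by (intro; ctac). ring. }
  assert (Eh1 : I (fun x => Derive h x * Derive h x) = I (fun x => G1 x * G1 x) + I (fun x => r1 x * r1 x)).
  { rewrite (I_ext _ (fun x => G1 x * G1 x + r1 x * r1 x + 2 * (G1 x * (Derive h x - G1 x)))).
    2: { intros x. unfold r1. ring. }
    rewrite I_plus, I_plus, I_scal, orth1 by (intro; ctac). ring. }
  set (Qp := I (fun x => G1 x * G1 x) - I (fun x => psi x * psi x)).
  set (Qr := I (fun x => r1 x * r1 x) - I (fun x => r0 x * r0 x)).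
  assert (Key : oval_length h ^ 2 - 4 * PI * oval_area h = 2 * PI * (Qp + Qr)).
  { rewrite HL, HA, Ehh, Eh1, <- Ha0. unfold Qp, Qr. field. }
  assert (KeyP : 4 * PI * Rabs (OPS_area h k) = 2 * PI * Qp).
  { rewrite HAP. rewrite Rabs_left1 by (unfold Qp in *; lra). unfold Qp. field. }
  rewrite Key, KeyP.
  assert (HQp : 0 <= Qp) by (unfold Qp; lra).
  assert (HQr : 0 <= Qr) by (unfold Qr; lra).
  split; [nra|]. split.
  - intros Heq.
    assert (Qr0 : Qr = 0) by nra.
    assert (Wq : I (fun x => r1 x * r1 x) = I (fun x => r0 x * r0 x)) by (unfold Qr in Qr0; lra).
    assert (R2 := wirt_eq r0 r1 r2 r3 Dr0 Dr1 Dr2 Cr3 Pr0 Ir0 Wq).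
    assert (R0 := ode_uniq r0 r1 r2 Dr0 Dr1 R2).
    set (A := r0 0). set (B := r1 0).
    assert (Hh : forall x, h x = G0 x + A * cos x + B * sin x).
    { intros x. specialize (R0 x). fold A B in R0. unfold r0 in R0. lra. }
    assert (HGs : forall s j, G0 (s + ang k j) = G0 s) by (intros; apply avg_shift; auto).
    assert (Hsa : sin (ang k 1) > 0).
    { assert (He := e_bounds k Hk). rewrite angS, ang_0 by auto. apply sin_gt_0; lra. }
    destruct (Gcs_zero G0 (ang k 1) CG0 PG0 ltac:(intros; apply avg_shift1; auto) Hsa) as [Zc Zs].
    assert (St : steiner_point h = (A, B)).
    { unfold steiner_point. change (RInt ?g 0 (2 * PI)) with (I g).
      rewrite (I_ext (fun s => h s * cos s) (fun x => G0 x * cos x + A * (cos x * cos x) + B * (sin x * cos x))) by (intros; rewrite Hh; ring).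
      rewrite (I_ext (fun s => h s * sin s) (fun x => G0 x * sin x + B * (sin x * sin x) + A * (sin x * cos x))) by (intros; rewrite Hh; ring).
      rewrite !I_plus, !I_scal, Zc, Zs, I_cc, I_ss, I_sc by (intro; ctac).
      f_equal; field; lra. }
    intros s v Hv. rewrite St. apply (fwd_poly h G0 k A B Hk Hh HGs s v Hv).
  - intros Hpoly.
    destruct (steiner_point h) as [c1 c2] eqn:Est.
    assert (Hb := bwd_poly h (Derive h) (Derive_n h 2) k c1 c2 Hk D0 D1 Hpos Hpoly).
    set (F := fun x => h x - c1 * cos x - c2 * sin x).
    assert (HF : forall x, F (x + ang k 1) = F x) by (intros; unfold F; apply Hb).
    assert (HG0 : forall x, G0 x = F x).
    { intros x. rewrite <- (avg_lin k F c1 c2 Hk HF x). unfold G0, avgk. f_equal.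
      apply sum_n_m_ext. intros j. unfold F. match goal with |- ?a = ?b => change (@eq R a b) end. ring. }
    assert (Er0 : forall x, r0 x = c1 * cos x + c2 * sin x) by (intros; unfold r0; rewrite HG0; unfold F; ring).
    assert (Er1 : forall x, r1 x = - c1 * sin x + c2 * cos x).
    { intros x. apply (D_uniq r0 r1 (fun y => c1 * cos y + c2 * sin y) x); auto.
      auto_derive; auto. ring. }
    assert (Qr0 : Qr = 0).
    { unfold Qr.
      rewrite (I_ext (fun x => r1 x * r1 x) (fun x => (c1 * c1) * (sin x * sin x) + (- 2 * c1 * c2) * (sin x * cos x) + (c2 * c2) * (cos x * cos x))) by (intros; rewrite Er1; ring).
      rewrite (I_ext (fun x => r0 x * r0 x) (fun x => (c1 * c1) * (cos x * cos x) + (2 * c1 * c2) * (sin x * cos x) + (c2 * c2) * (sin x * sin x))) by (intros; rewrite Er0; ring).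
      rewrite !I_plus, !I_scal, I_cc, I_ss, I_sc by (intro; ctac). ring. }
    rewrite Qr0. ring.
Qed.
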